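(* For every graph $G=(V,E)$, the projection onto the $x$-variables of the linear relaxation of $\mathcal{E}(G)$ is contained in the linear relaxation of $\mathcal{N}_2(G)$; consequently, for every weight vector $w$, the linear relaxation value of $\mathcal{E}(G)$ is at most that of $\mathcal{N}_2(G)$. Moreover, the containment is strict when $G$ is the star $K_{1,3}$.
   Context: $N(u)$ is the neighborhood of $u$, $\delta(v)$ the set of edges incident to $v$, $x(A)=\sum_{a\in A}x_a$. Both formulations compute a maximum $w$-weighted co-2-plex (vertex set inducing maximum degree at most 1). $\mathcal{N}_2(G)=\max\{w^\top x: x\in\{0,1\}^V,\ x(N(u))+(|N(u)|-1)x_u\le|N(u)|\ \forall u\in V\}$. $\mathcal{E}(G)=\max\{w^\top x: (x,y)\in\{0,1\}^V\times\{0,1\}^E,\ y(\delta(v))\le x_v\ \forall v\in V,\ y_e\ge 0\ \forall e\in E,\ x_u+x_v-y_{uv}\le 1\ \forall uv\in E\}$. The linear relaxation of a formulation replaces the binary constraints by $[0,1]$ bounds. *)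

(* Defs.v *)
From mathcomp Require Import all_boot all_order all_algebra.
Set Implicit Arguments. Unset Strict Implicit. Unset Printing Implicit Defensive.
Import Order.TTheory GRing.Theory Num.Theory.
Local Open Scope ring_scope.

(* A (finite simple) graph: vertex type T : finType, adjacency e : rel T,
   assumed symmetric and irreflexive (hypotheses in the theorem). *)

Definition nbhd (T : finType) (e : rel T) (u : T) : {set T} := [set v | e u v].

Definition edges (T : finType) (e : rel T) : {set {set T}} :=
  [set f : {set T} | [exists u : T, exists v : T, e u v && (f == [set u; v])]].

Definition delta (T : finType) (e : rel T) (v : T) : {set {set T}} :=
  [set f in edges e | v \in f].

Definition xsum (R : realFieldType) (T : finType) (x : T -> R) (A : {set T}) : R :=
  \sum_(a in A) x a.

Definition ysum (R : realFieldType) (T : finType) (y : {set T} -> R)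
  (A : {set {set T}}) : R := \sum_(f in A) y f.

Definition relaxN2 (R : realFieldType) (T : finType) (e : rel T) (x : T -> R) : Prop :=
  (forall v, 0 <= x v <= 1) /\
  (forall u, xsum x (nbhd e u) + (#|nbhd e u|%:R - 1) * x u <= #|nbhd e u|%:R).

(* Linear relaxation of E(G); y is a function on vertex subsets, only its
   values on edges matter. *)
Definition relaxE (R : realFieldType) (T : finType) (e : rel T)
  (x : T -> R) (y : {set T} -> R) : Prop :=
  (forall v, 0 <= x v <= 1) /\
  (forall f, f \in edges e -> 0 <= y f <= 1) /\
  (forall v, ysum y (delta e v) <= x v) /\
  (forall f, f \in edges e -> 0 <= y f) /\
  (forall u v, e u v -> x u + x v - y [set u; v] <= 1).

Definition projE (R : realFieldType) (T : finType) (e : rel T) (x : T -> R) : Prop :=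
  exists y : {set T} -> R, relaxE e x y.

Definition wval (R : realFieldType) (T : finType) (w x : T -> R) : R :=
  \sum_(v : T) w v * x v.

Definition K13 : rel 'I_4 :=
  fun i j => (i != j) && ((i == ord0) || (j == ord0)).

(* Main.v *)
Require Import Defs.
From mathcomp Require Import all_boot all_order all_algebra.
From mathcomp Require Import ring lra.
Import Order.TTheory GRing.Theory Num.Theory.
Local Open Scope ring_scope.

Lemma sum_sub (R : realFieldType) (T : finType) (A B : {set T}) (F : T -> R) :
  A \subset B -> (forall t, t \in B -> 0 <= F t) ->
  \sum_(t in A) F t <= \sum_(t in B) F t.
Proof.
move=> AB F0; rewrite [X in _ <= X](big_setID A) /= (setIidPr AB) lerDl.
apply: sumr_ge0 => t; rewrite inE => /andP[_ tB]; exact: F0.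
Qed.

Lemma part1 (R : realFieldType) (T : finType) (e : rel T) :
  symmetric e -> irreflexive e ->
  forall x : T -> R, projE e x -> relaxN2 e x.
Proof.
move=> esym eirr x [y [xb [yb [yd [y0 yc]]]]]; split => // u.
set N := nbhd e u.
have H1 : xsum x N <= \sum_(v in N) (1 - x u + y [set u; v]).
  apply: ler_sum => v; rewrite inE => euv; have := yc _ _ euv; lra.
rewrite big_split /= in H1.
have Ec : \sum_(i in N) (1 - x u) = (1 - x u) *+ #|N| by rewrite sumr_const.
rewrite Ec in H1.
have H2 : \sum_(v in N) y [set u; v] <= x u.
  apply: le_trans (yd u).
  rewrite /ysum -(big_imset (fun v => y v)).
    apply: sum_sub.
      apply/subsetP => f /imsetP [v]; rewrite inE => euv ->.
      rewrite inE; apply/andP; split; last by rewrite !inE eqxx.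
      by rewrite inE; apply/existsP; exists u; apply/existsP; exists v; rewrite euv eqxx.
    by move=> f; rewrite inE => /andP[/y0].
  move=> v1 v2; rewrite !inE => e1 e2 E.
  have : v1 \in [set u; v2] by rewrite -E !inE eqxx orbT.
  rewrite !inE => /orP[/eqP E1|/eqP //].
  by move: e1; rewrite E1 eirr.
set d := (#|N|%:R : R) in H1 *.
have : (1 - x u) *+ #|N| = d * (1 - x u) by rewrite /d mulr_natl.
nra.
Qed.


Definition i1 : 'I_4 := Ordinal (isT : (1 < 4)%N).
Definition i2 : 'I_4 := Ordinal (isT : (2 < 4)%N).
Definition i3 : 'I_4 := Ordinal (isT : (3 < 4)%N).

Lemma sum4 (R : realFieldType) (A : {set 'I_4}) (F : 'I_4 -> R) :
  \sum_(i in A) F i = (if ord0 \in A then F ord0 else 0) + (if i1 \in A then F i1 else 0)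
    + (if i2 \in A then F i2 else 0) + (if i3 \in A then F i3 else 0).
Proof.
rewrite big_mkcond /= !big_ord_recl big_ord0 addr0 !addrA.
have -> : lift ord0 ord0 = i1 by apply/val_inj.
have -> : lift ord0 (lift ord0 ord0) = i2 by apply/val_inj.
by have -> : lift ord0 (lift ord0 (lift ord0 (ord0 : 'I_1))) = i3 by apply/val_inj.
Qed.

Lemma ord4 (u : 'I_4) : [\/ u = ord0, u = i1, u = i2 | u = i3].
Proof.
case: u => [[|[|[|[|k]]]] Hk].
- by constructor 1; apply/val_inj.
- by constructor 2; apply/val_inj.
- by constructor 3; apply/val_inj.
- by constructor 4; apply/val_inj.
- by [].
Qed.

Lemma cardR (R : realFieldType) (T : finType) (A : {set T}) : (#|A|%:R : R) = \sum_(i in A) 1.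
Proof. by rewrite sumr_const. Qed.

Lemma part3 (R : realFieldType) : exists x : 'I_4 -> R, relaxN2 K13 x /\ ~ projE K13 x.
Proof.
pose x (i : 'I_4) : R := if val i == 0%N then 1/2 else if val i == 3%N then 0 else 1.
exists x; split.
  split.
    by move=> v; case: (ord4 v) => ->; rewrite /x /=; apply/andP; split; lra.
  move=> u; rewrite /xsum cardR !sum4.
  case: (ord4 u) => ->; rewrite !inE /K13 /x /=; lra.
move=> [y [_ [_ [yd [y0 yc]]]]].
have h1 := yc ord0 i1 isT.
have h2 := yc ord0 i2 isT.
have hd := yd ord0.
have ed : forall v, v = i1 \/ v = i2 -> [set ord0; v] \in delta K13 ord0.
  move=> v hv; rewrite inE !inE eqxx andbT; apply/existsP; exists ord0; apply/existsP; exists v.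
  by rewrite eqxx andbT; case: hv => ->.
have hs : y [set ord0; i1] + y [set ord0; i2] <= ysum y (delta K13 ord0).
  apply: le_trans (@sum_sub R _ [set [set ord0; i1]; [set ord0; i2]] _ y _ _).
  - rewrite big_setU1 /= ?big_set1 //.
    rewrite inE; apply/negP => /eqP/setP/(_ i1); rewrite !inE /=.
    by [].
  - by apply/subsetP => f; rewrite in_set2 => /orP[]/eqP->; apply: ed; auto.
  - by move=> f; rewrite inE => /andP[/y0].
move: h1 h2 hd hs; rewrite /x /=; lra.
Qed.

Theorem mainTheorem16 (R : realFieldType) :
  (forall (T : finType) (e : rel T), symmetric e -> irreflexive e ->
     forall x : T -> R, projE e x -> relaxN2 e x) /\
  (forall (T : finType) (e : rel T), symmetric e -> irreflexive e ->
     forall w : T -> R, forall (x : T -> R) (y : {set T} -> R), relaxE e x y ->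
       exists x' : T -> R, relaxN2 e x' /\ wval w x <= wval w x') /\
  (exists x : 'I_4 -> R, relaxN2 K13 x /\ ~ projE K13 x).
Proof.
split; first exact: part1.
split; last exact: part3.
move=> T e es ei w x y H; exists x; split => //.
by apply: part1 => //; exists y.
Qed.
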